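(* Let $R$ be a local ring with maximal ideal $\mathcal{M}$ such that $\mathcal{M}$ is finitely generated both as a left ideal and as a right ideal, and $\mathcal{M}^k=(0)$ for some $k\in\mathbb{N}$. If every left $R$-module generated by two elements is a direct sum of cyclic modules, then either $R$ is a left Artinian principal left ideal ring or $R$ is a right Artinian principal right ideal ring.
   Context: All rings have identity and modules are unital. A ring $R$ is local if it has a unique maximal left ideal $\mathcal{M}$. *)

(* Defs.v *)
From HB Require Import structures.
From mathcomp Require Import all_boot all_order all_algebra.
Set Implicit Arguments. Unset Strict Implicit. Unset Printing Implicit Defensive.
Import GRing.Theory.
Local Open Scope ring_scope.

Section Ideals.
Variable R : nzRingType.

Definition left_ideal (I : R -> Prop) : Prop :=
  [/\ I 0, (forall x y, I x -> I y -> I (x + y)) & (forall r x, I x -> I (r * x))].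

Definition right_ideal (I : R -> Prop) : Prop :=
  [/\ I 0, (forall x y, I x -> I y -> I (x + y)) & (forall r x, I x -> I (x * r))].

Definition maximal_left_ideal (M : R -> Prop) : Prop :=
  [/\ left_ideal M, ~ M 1 &
      forall J, left_ideal J -> ~ J 1 -> (forall x, M x -> J x) -> forall x, J x -> M x].

Definition local_with_max (M : R -> Prop) : Prop :=
  maximal_left_ideal M /\
  forall N, maximal_left_ideal N -> forall x, N x <-> M x.

Definition fg_left_ideal (I : R -> Prop) : Prop :=
  exists (n : nat) (s : 'I_n -> R),
    forall x, I x <-> exists r : 'I_n -> R, x = \sum_(i < n) r i * s i.

Definition fg_right_ideal (I : R -> Prop) : Prop :=
  exists (n : nat) (s : 'I_n -> R),
    forall x, I x <-> exists r : 'I_n -> R, x = \sum_(i < n) s i * r i.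

(* I^k = (0): I^k is generated by the products of k elements of I *)
Definition ideal_pow_zero (I : R -> Prop) (k : nat) : Prop :=
  forall m : 'I_k -> R, (forall i, I (m i)) -> \prod_(i < k) m i = 0.

Definition left_artinian : Prop :=
  forall I : nat -> R -> Prop,
    (forall n, left_ideal (I n)) ->
    (forall n x, I n.+1 x -> I n x) ->
    exists N, forall n, (N <= n)%N -> forall x, I n x <-> I N x.

Definition right_artinian : Prop :=
  forall I : nat -> R -> Prop,
    (forall n, right_ideal (I n)) ->
    (forall n x, I n.+1 x -> I n x) ->
    exists N, forall n, (N <= n)%N -> forall x, I n x <-> I N x.

Definition principal_left_ideal_ring : Prop :=
  forall I, left_ideal I -> exists a : R, forall x, I x <-> exists r, x = r * a.

Definition principal_right_ideal_ring : Prop :=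
  forall I, right_ideal I -> exists a : R, forall x, I x <-> exists r, x = a * r.

End Ideals.

Section Modules.
Variables (R : nzRingType) (V : lmodType R).

Definition generated_by_two : Prop :=
  exists a b : V, forall v : V, exists r s : R, v = r *: a + s *: b.

Definition direct_sum_of_cyclics : Prop :=
  exists (n : nat) (x : 'I_n -> V),
    (forall v : V, exists r : 'I_n -> R, v = \sum_(i < n) r i *: x i) /\
    (forall r : 'I_n -> R, \sum_(i < n) r i *: x i = 0 -> forall i, r i *: x i = 0).

End Modules.

(* Main.v *)
Require Import Defs.
From HB Require Import structures.
From mathcomp Require Import all_boot all_order all_algebra.
From mathcomp Require Import boolp.
From Stdlib Require Import Classical.
From mathcomp Require Import zify.
Set Implicit Arguments. Unset Strict Implicit. Unset Printing Implicit Defensive.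
Import GRing.Theory.
Local Open Scope ring_scope.

#[local] Set Default Proof Using "All".
Lemma powinv (R : nzRingType) (a b : R) n : a * b = 1 -> a ^+ n * b ^+ n = 1.
Proof.
move=> h; elim: n => [|n IH]; first by rewrite !expr0 mulr1.
by rewrite exprSr exprS mulrA -(mulrA _ a) h mulr1.
Qed.

Lemma geom (R : nzRingType) (m : R) n :
  (\sum_(i < n) m ^+ i) * (1 - m) = 1 - m ^+ n.
Proof.
elim: n => [|n IH]; first by rewrite big_ord0 mul0r expr0 subrr.
rewrite big_ord_recr /= mulrDl IH mulrBr mulr1 exprSr.
by rewrite addrA subrK.
Qed.

Section Loc.
Variables (R : nzRingType) (M : R -> Prop) (k : nat).
Hypothesis M0 : M 0.
Hypothesis MD : forall a b, M a -> M b -> M (a + b).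
Hypothesis ML : forall r a, M a -> M (r * a).
Hypothesis M1 : ~ M 1.
Hypothesis Mmax : forall J, (J 0 /\ (forall a b, J a -> J b -> J (a + b)) /\
   (forall r a, J a -> J (r * a))) -> ~ J 1 -> (forall a, M a -> J a) -> forall a, J a -> M a.
Hypothesis Mpow : forall m, M m -> m ^+ k = 0.

Lemma MN a : M a -> M (- a).
Proof. by move=> h; rewrite -mulN1r; apply: ML. Qed.
Lemma MB a b : M a -> M b -> M (a - b).
Proof. by move=> ha hb; apply: MD => //; apply: MN. Qed.

Lemma Msum n (f : 'I_n -> R) : (forall i, M (f i)) -> M (\sum_i f i).
Proof. by move=> h; apply: (big_ind M) => // i _; apply: h. Qed.

Lemma linv a : ~ M a -> exists b, b * a = 1.
Proof.
move=> na.
pose J := fun z => exists r m, M m /\ z = r * a + m.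
have J1 : J 1.
  apply: NNPP => nJ1; apply: na; apply: (Mmax (J := J)) => //.
  - split; first by exists 0, 0; rewrite mul0r addr0.
    split.
      move=> u v [r [m [hm ->]]] [r' [m' [hm' ->]]]; exists (r + r'), (m + m').
      by split; [apply: MD | rewrite mulrDl addrACA].
    move=> s u [r [m [hm ->]]]; exists (s * r), (s * m).
    by split; [apply: ML | rewrite mulrDr mulrA].
  - by move=> u hu; exists 0, u; rewrite mul0r add0r.
  - by exists 1, 0; rewrite mul1r addr0.
case: J1 => r [m [hm e]].
exists ((\sum_(i < k) m ^+ i) * r); rewrite -mulrA.
have -> : r * a = 1 - m by rewrite e addrK.
by rewrite geom (Mpow hm) subr0.
Qed.

Lemma unitM a : ~ M a -> exists b, b * a = 1 /\ a * b = 1.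
Proof.
move=> na; case: (linv na) => b hb.
have nb : ~ M b.
  move=> mb; have := powinv k hb; rewrite (Mpow mb) mul0r => /eqP.
  by rewrite eq_sym oner_eq0.
case: (linv nb) => c hc.
have ca : c = a by rewrite -[c]mulr1 -hb mulrA hc mul1r.
by exists b; split => //; rewrite -ca.
Qed.

Lemma MR a r : M a -> M (a * r).
Proof.
move=> ma; apply: NNPP => nar; case: (unitM nar) => w [_ hw].
have := powinv k (etrans (mulrA a r w) hw).
rewrite (Mpow ma) mul0r => /eqP; by rewrite eq_sym oner_eq0.
Qed.

Lemma notM1B m : M m -> ~ M (1 - m).
Proof.
by move=> hm h; apply: M1; rewrite -(subrK m 1); apply: MD.
Qed.
Lemma lin2 (V : lmodType R) n (z : 'I_n -> V) (p q : 'I_n -> R) (a b : R) :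
  \sum_i (a * p i + b * q i) *: z i = a *: (\sum_i p i *: z i) + b *: (\sum_i q i *: z i).
Proof.
rewrite !scaler_sumr -big_split /=; apply: eq_bigr => i _.
by rewrite scalerDl !scalerA.
Qed.

Lemma comb (V : lmodType R) n (r a b : 'I_n -> R) (e1 e2 : V) :
  \sum_i r i *: (a i *: e1 + b i *: e2) = (\sum_i r i * a i) *: e1 + (\sum_i r i * b i) *: e2.
Proof.
rewrite !scaler_suml -big_split /=; apply: eq_bigr => i _.
by rewrite scalerDr !scalerA.
Qed.

Lemma delta (V : lmodType R) n (z : 'I_n -> V) j : \sum_i (i == j)%:R *: z i = z j.
Proof.
rewrite (bigD1 j) //= eqxx scale1r big1 ?addr0 // => i /negbTE ->.
by rewrite scale0r.
Qed.

Lemma compar (V : lmodType R) (e1 e2 : V) x y :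
  M x -> M y ->
  (forall v, exists a b, v = a *: e1 + b *: e2) ->
  (forall a b, a *: e1 + b *: e2 = 0 -> exists c, a = c * x /\ b = c * y) ->
  x *: e1 + y *: e2 = 0 ->
  (exists (n : nat) (z : 'I_n -> V),
    (forall v : V, exists r : 'I_n -> R, v = \sum_(i < n) r i *: z i) /\
    (forall r : 'I_n -> R, \sum_(i < n) r i *: z i = 0 -> forall i, r i *: z i = 0)) ->
  (exists b, x = y * b) \/ (exists b, y = x * b).
Proof.
move=> Mx My gen rel rxy [n [z [span ind]]].
case: (span e1) => r hr; case: (span e2) => s hs.
have /fin_all_exists [ab hab] : forall i, exists p : R * R, z i = p.1 *: e1 + p.2 *: e2.
  move=> i; case: (gen (z i)) => a [b h]; by exists (a, b).
pose t i := x * r i + y * s i.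
have Mt i : M (t i) by apply: MD; apply: MR.
have tz : forall i, t i *: z i = 0.
  by apply: ind; rewrite /t lin2 -hr -hs.
have /fin_all_exists [d hd] : forall i, exists di : R,
    t i * (ab i).1 = di * x /\ t i * (ab i).2 = di * y.
  move=> i; apply: rel; by rewrite -!scalerA -scalerDr -hab tz.
pose A := \sum_i r i * (ab i).1.
pose C := \sum_i r i * (ab i).2.
pose B := \sum_i s i * (ab i).1.
pose E := \sum_i s i * (ab i).2.
have hA : e1 = A *: e1 + C *: e2.
  rewrite {1}hr -comb; apply: eq_bigr => i _; by rewrite hab.
have hB : e2 = B *: e1 + E *: e2.
  rewrite {1}hs -comb; apply: eq_bigr => i _; by rewrite hab.
have [c1 [h1 h1']] : exists c1, A - 1 = c1 * x /\ C = c1 * y.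
  by apply: rel; rewrite scalerBl scale1r addrAC -hA subrr.
have [c2 [h2 h2']] : exists c2, B = c2 * x /\ E - 1 = c2 * y.
  by apply: rel; rewrite scalerBl scale1r addrA -hB subrr.
pose D := \sum_i d i.
pose u := 1 + x * c1 + y * c2.
have key : (D - u) * x = 0.
  have e : \sum_i t i * (ab i).1 = x * A + y * B.
    rewrite /A /B !mulr_sumr -big_split; apply: eq_bigr => i _.
    by rewrite /t mulrDl !mulrA.
  have e' : \sum_i t i * (ab i).1 = D * x.
    by rewrite /D mulr_suml; apply: eq_bigr => i _; case: (hd i).
  have hA' : A = c1 * x + 1 by rewrite -h1 subrK.
  rewrite mulrBl -e' e hA' h2 /u mulrDr mulr1 !mulrDl mul1r !mulrA.
  by rewrite [x * c1 * x + x]addrC subrr.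
case: (classic (M (D - u))) => hDu; last first.
  case: (unitM hDu) => g [hg _]; left; exists 0.
  by rewrite mulr0 -[x]mul1r -hg -mulrA key mulr0.
have nD : ~ M D.
  move=> mD; apply: M1.
  have -> : 1 = D - (D - u) - (x * c1 + y * c2).
    by rewrite subKr /u -[1 + _ + _]addrA addrK.
  apply: MB; first exact: MB.
  by apply: MD; apply: MR.
have [j nj] : exists j, ~ M (d j).
  apply: NNPP => H; apply: nD; apply: Msum => i; apply: NNPP => ni; apply: H.
  by exists i.
case: (unitM nj) => g [hg _].
have hx : x = g * (t j * (ab j).1) by rewrite (hd j).1 mulrA hg mul1r.
have hy : y = g * (t j * (ab j).2) by rewrite (hd j).2 mulrA hg mul1r.
case: (classic (M (ab j).1)) => h1j; last first.
  case: (unitM h1j) => h [_ hh]; right; exists (h * (ab j).2).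
  by rewrite hy hx -!mulrA (mulrA (ab j).1) hh mul1r.
case: (classic (M (ab j).2)) => h2j; last first.
  case: (unitM h2j) => h [_ hh]; left; exists (h * (ab j).1).
  by rewrite hy {1}hx -!mulrA (mulrA (ab j).2) hh mul1r.
have w : \sum_i ((ab j).1 * r i + (ab j).2 * s i - (i == j)%:R) *: z i = 0.
  under eq_bigr do rewrite scalerBl.
  by rewrite sumrB lin2 -hr -hs delta -hab subrr.
have := ind _ w j; rewrite eqxx => hz.
have ncoef : ~ M ((ab j).1 * r j + (ab j).2 * s j - 1%:R).
  move=> hc; apply: M1; rewrite -[1](subKr ((ab j).1 * r j + (ab j).2 * s j)).
  by apply: MB => //; apply: MD; apply: MR.
case: (unitM ncoef) => w' [hw' _].
have zj0 : z j = 0 by rewrite -[z j]scale1r -hw' -scalerA hz scaler0.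
have [c [hc _]] := rel _ _ (etrans (esym (hab j)) zj0).
have Mm : M (g * t j * c) by apply: MR; apply: ML.
case: (unitM (notM1B Mm)) => v [hv _].
left; exists 0; rewrite mulr0.
have e : (1 - g * t j * c) * x = 0.
  by rewrite mulrBl mul1r -!mulrA -hc -hx subrr.
by rewrite -[x]mul1r -hv -mulrA e mulr0.
Qed.

End Loc.
Section Quot.
Variables (R : nzRingType) (x y : R).

Definition eqv (v w : R * R) : Prop := exists c, v.1 - w.1 = c * x /\ v.2 - w.2 = c * y.

Lemma eqv_refl v : eqv v v.
Proof. by exists 0; rewrite !subrr !mul0r. Qed.
Lemma eqv_sym v w : eqv v w -> eqv w v.
Proof.
by case=> c [h1 h2]; exists (- c); rewrite !mulNr -h1 -h2 !opprB.
Qed.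
Lemma eqv_trans v w u : eqv v w -> eqv w u -> eqv v u.
Proof.
case=> c [h1 h2] [d [k1 k2]]; exists (c + d); rewrite !mulrDl -h1 -h2 -k1 -k2.
by split; rewrite addrA subrK.
Qed.

Definition cls (v : R * R) : pred (R * R) := fun w => `[< eqv w v >].
Lemma cls_ex v : exists w, cls v w.
Proof. by exists v; apply/asboolP; apply: eqv_refl. Qed.
Definition canon v := xchoose (cls_ex v).
Lemma canon_eqv v : eqv (canon v) v.
Proof. exact/asboolP/(xchooseP (cls_ex v)). Qed.
Lemma canon_eq v w : eqv v w -> canon v = canon w.
Proof.
move=> h; apply: eq_xchoose => u; apply/asboolP/asboolP => hu.
  exact: eqv_trans hu h.
exact: eqv_trans hu (eqv_sym h).
Qed.
Lemma canon_idem v : canon (canon v) = canon v.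
Proof. exact/canon_eq/canon_eqv. Qed.

Definition Q := {v : R * R | canon v == v}.
HB.instance Definition _ := Choice.on Q.

Definition pi v : Q := exist _ (canon v) (introT eqP (canon_idem v)).
Lemma piK (a : Q) : pi (val a) = a.
Proof. by apply: val_inj => /=; case: a => v /= /eqP. Qed.
Lemma pi_eq v w : pi v = pi w <-> eqv v w.
Proof.
split => [h|h].
  have: canon v = canon w by have := congr1 val h.
  move=> e; apply: eqv_trans (eqv_sym (canon_eqv v)) _.
  by rewrite e; apply: canon_eqv.
by apply: val_inj => /=; apply: canon_eq.
Qed.
Lemma piS (a : Q) : exists v, a = pi v.
Proof. by exists (val a); rewrite piK. Qed.

Definition padd (v w : R * R) := (v.1 + w.1, v.2 + w.2).
Definition popp (v : R * R) := (- v.1, - v.2).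
Definition pscale (r : R) (v : R * R) := (r * v.1, r * v.2).

Definition qzero : Q := pi (0, 0).
Definition qadd (a b : Q) : Q := pi (padd (val a) (val b)).
Definition qopp (a : Q) : Q := pi (popp (val a)).
Definition qscale r (a : Q) : Q := pi (pscale r (val a)).

Lemma qaddE v w : qadd (pi v) (pi w) = pi (padd v w).
Proof.
apply/pi_eq; case: (canon_eqv v) => c [h1 h2]; case: (canon_eqv w) => d [k1 k2].
exists (c + d); rewrite /= !mulrDl -h1 -h2 -k1 -k2.
by split; rewrite opprD addrACA.
Qed.
Lemma qoppE v : qopp (pi v) = pi (popp v).
Proof.
apply/pi_eq; case: (canon_eqv v) => c [h1 h2]; exists (- c).
by rewrite /popp /= !mulNr -h1 -h2 !opprB !opprK; split; apply: addrC.
Qed.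
Lemma qscaleE r v : qscale r (pi v) = pi (pscale r v).
Proof.
apply/pi_eq; case: (canon_eqv v) => c [h1 h2]; exists (r * c).
by rewrite /= -!mulrA -h1 -h2 !mulrBr.
Qed.

Lemma qaddA : associative qadd.
Proof.
move=> a b c; case: (piS a) => u ->; case: (piS b) => v ->; case: (piS c) => w ->.
by rewrite !qaddE /padd /= !addrA.
Qed.
Lemma qaddC : commutative qadd.
Proof.
move=> a b; case: (piS a) => u ->; case: (piS b) => v ->.
by rewrite !qaddE /padd /= (addrC u.1) (addrC u.2).
Qed.
Lemma qadd0 : left_id qzero qadd.
Proof.
move=> a; case: (piS a) => u ->.
by rewrite /qzero !qaddE /padd /= !add0r; case: u.
Qed.
Lemma qaddN : left_inverse qzero qopp qadd.
Proof.
move=> a; case: (piS a) => u ->.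
by rewrite qoppE qaddE /padd /popp /= !addNr.
Qed.
HB.instance Definition _ := GRing.isZmodule.Build Q qaddA qaddC qadd0 qaddN.

Lemma qscaleA a b v : qscale a (qscale b v) = qscale (a * b) v.
Proof. case: (piS v) => u ->; by rewrite !qscaleE /pscale /= !mulrA. Qed.
Lemma qscale1 : left_id 1 qscale.
Proof. move=> v; case: (piS v) => u ->; by rewrite qscaleE /pscale /= !mul1r; case: u. Qed.
Lemma qscaleDr : right_distributive qscale +%R.
Proof.
move=> a v w; case: (piS v) => u ->; case: (piS w) => u' ->.
by rewrite /GRing.add /= qaddE !qscaleE qaddE /pscale /padd /= !mulrDr.
Qed.
Lemma qscaleDl v : {morph qscale^~ v: a b / a + b}.
Proof.
move=> a b; case: (piS v) => u ->.
by rewrite /GRing.add /= !qscaleE qaddE /pscale /padd /= !mulrDl.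
Qed.
HB.instance Definition _ := GRing.Zmodule_isLmodule.Build R Q qscaleA qscale1 qscaleDr qscaleDl.

Lemma Q_facts :
  [/\ forall v : Q, exists a b : R, v = a *: pi (1, 0) + b *: pi (0, 1),
      forall a b : R, a *: pi (1, 0) + b *: pi (0, 1) = 0 -> exists c, a = c * x /\ b = c * y &
      x *: pi (1, 0) + y *: pi (0, 1) = 0].
Proof.
pose e1 := pi (1, 0); pose e2 := pi (0, 1).
have E a b : a *: e1 + b *: e2 = pi (a, b).
  rewrite /GRing.scale /= !qscaleE /GRing.add /= qaddE /pscale /padd /=.
  by rewrite !mulr1 !mulr0 addr0 add0r.
split.
- move=> v; case: (piS v) => [[a b] ->]; exists a, b; by rewrite E.
- move=> a b; rewrite E => /pi_eq [c [h1 h2]]; exists c; move: h1 h2 => /=.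
  by rewrite !subr0.
- rewrite E; apply/pi_eq; exists 1; by rewrite /= !subr0 !mul1r.
Qed.
End Quot.
Lemma stab (f : nat -> nat) B : (forall n, (f n <= f n.+1)%N) -> (forall n, (f n <= B)%N) ->
  exists N, forall n, (N <= n)%N -> f n = f N.
Proof.
move=> fm fb.
suff H : forall d (g : nat -> nat), (forall n, (g n <= g n.+1)%N) -> (forall n, (g n <= B)%N) ->
   (B - g 0 <= d)%N -> exists N, forall n, (N <= n)%N -> g n = g N.
  by apply: (H B) => //; apply: leq_subr.
elim=> [|d IH] g gm gb hd.
  exists 0%N => n _; have := gb n; have := gb 0%N.
  have : (g 0 <= g n)%N by apply: (homo_leq leqnn (@leq_trans) gm).
  lia.
case: (classic (forall n, g n = g 0%N)) => [h|h]; first by exists 0%N.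
have [n hn] : exists n, g n <> g 0%N by apply: NNPP => H; apply: h => n; apply: NNPP => H'; apply: H; exists n.
have h0n : (g 0 <= g n)%N by apply: (homo_leq leqnn (@leq_trans) gm).
have [N hN] : exists N, forall m, (N <= m)%N -> g (n + m)%N = g (n + N)%N.
  apply: (IH (fun m => g (n + m)%N)).
  - by move=> m; rewrite addnS.
  - by move=> m.
  - rewrite addn0; lia.
exists (n + N)%N => m hm.
have -> : m = (n + (m - n))%N by lia.
by apply: hN; lia.
Qed.

Section Chain.
Variables (R : nzRingType) (M : R -> Prop) (k : nat) (t : R).
Hypothesis unitM : forall a, ~ M a -> exists b, b * a = 1 /\ a * b = 1.
Hypothesis HM : forall x, M x <-> exists r, x = t * r.
Hypothesis Ht : t ^+ k = 0.

Lemma tpow0 i : (k <= i)%N -> t ^+ i = 0.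
Proof. by move=> h; rewrite -(subnK h) exprD Ht mulr0. Qed.

Lemma reprt d : forall i b, (k <= i + d)%N ->
  exists i' u, (exists v, v * u = 1 /\ u * v = 1) /\ t ^+ i * b = t ^+ i' * u.
Proof.
elim: d => [|d IH] i b h.
  exists i, 1; split; first by exists 1; rewrite mulr1.
  by rewrite tpow0 ?mul0r //; rewrite addn0 in h.
case: (classic (M b)) => hb; last first.
  by exists i, b; split => //; apply: unitM.
case/HM: hb => c ->; rewrite mulrA -exprSr; apply: IH.
by rewrite addSnnS.
Qed.

Lemma all_form a : exists i u, (exists v, v * u = 1 /\ u * v = 1) /\ a = t ^+ i * u.
Proof.
have [i [u [hu e]]] := @reprt k 0 a (leq_addl _ _).
by exists i, u; split => //; rewrite -e expr0 mul1r.
Qed.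

Definition levP (I : R -> Prop) : pred nat := fun i => (k <= i)%N || `[< I (t ^+ i) >].
Lemma levP_ex I : exists i, levP I i.
Proof. by exists k; rewrite /levP leqnn. Qed.
Definition lev I := ex_minn (levP_ex I).

Lemma lev_spec I : right_ideal I -> forall x, I x <-> exists r, x = t ^+ (lev I) * r.
Proof.
case=> I0 ID IM x; rewrite /lev; case: ex_minnP => m Pm minm.
have Im : I (t ^+ m).
  case/orP: Pm => [h|/asboolP //]; by rewrite tpow0.
split; last by case=> r ->; apply: IM.
move=> Ix; have [i [u [[v [hv1 hv2]] e]]] := all_form x.
have Ii : I (t ^+ i) by have := IM v _ Ix; rewrite e -mulrA hv2 mulr1.
have mi : (m <= i)%N by apply: minm; rewrite /levP; apply/orP; right; apply/asboolP.
by exists (t ^+ (i - m) * u); rewrite mulrA -exprD subnKC.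
Qed.

Lemma lev_le I : (lev I <= k)%N.
Proof. rewrite /lev; case: ex_minnP => m _ minm; apply: minm; by rewrite /levP leqnn. Qed.

Lemma lev_mono (I J : R -> Prop) : (forall x, I x -> J x) -> (lev J <= lev I)%N.
Proof.
move=> IJ; rewrite {2}/lev; case: ex_minnP => m Pm _.
rewrite /lev; case: ex_minnP => m' _ minm; apply: minm.
case/orP: Pm => [h|/asboolP h]; rewrite /levP; apply/orP; first by left.
by right; apply/asboolP; apply: IJ.
Qed.

Lemma right_concl : right_artinian R /\ principal_right_ideal_ring R.
Proof.
split.
  move=> I Iid Idec.
  have [N hN] := stab (f := fun n => lev (I n)) (B := k)
     (fun n => lev_mono (Idec n)) (fun n => lev_le _).
  exists N => n hn x.
  by rewrite (lev_spec (Iid n)) (lev_spec (Iid N)) (hN n hn).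
move=> I Iid; exists (t ^+ lev I); exact: lev_spec.
Qed.
End Chain.

Lemma fam_max (R : nzRingType) (M : R -> Prop) (M0 : M 0)
  (Hc : forall x y, M x -> M y -> (exists b, x = y * b) \/ (exists b, y = x * b))
  n (s : 'I_n -> R) : (forall i, M (s i)) -> exists t, M t /\ forall i, exists c, s i = t * c.
Proof.
elim: n s => [|n IH] s hs.
  by exists 0; split => // [[]].
have [t [Mt ht]] := IH (fun i => s (lift ord0 i)) (fun i => hs _).
case: (Hc (s ord0) t (hs ord0) Mt) => [[b hb]|[b hb]].
  exists t; split => // i; case: (unliftP ord0 i) => [j ->|->]; first exact: ht.
  by exists b.
exists (s ord0); split => // i; case: (unliftP ord0 i) => [j ->|->].
  by case: (ht j) => c ->; rewrite hb; exists (b * c); rewrite mulrA.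
by exists 1; rewrite mulr1.
Qed.

Unset Implicit Arguments.

Theorem theorem2p6 (R : nzRingType) (M : R -> Prop) (k : nat) :
  local_with_max M ->
  fg_left_ideal M -> fg_right_ideal M ->
  ideal_pow_zero M k ->
  (forall V : lmodType R, generated_by_two V -> direct_sum_of_cyclics V) ->
  (left_artinian R /\ principal_left_ideal_ring R) \/
  (right_artinian R /\ principal_right_ideal_ring R).
Proof.
move=> [[[M0 MD ML] M1 Mmax] _] _ [n [s hs]] Hpow HV.
have Mpow : forall m, M m -> m ^+ k = 0.
  move=> m hm; have := Hpow (fun _ => m) (fun _ => hm); by rewrite prodr_const card_ord.
have Mmax' : forall J, (J 0 /\ (forall a b, J a -> J b -> J (a + b)) /\
   (forall r a, J a -> J (r * a))) -> ~ J 1 -> (forall a, M a -> J a) -> forall a, J a -> M a.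
  by move=> J [J0 [JD JM]]; apply: Mmax; split.
have Hc : forall x y, M x -> M y -> (exists b, x = y * b) \/ (exists b, y = x * b).
  move=> x y Mx My; have [gen rel rxy] := Q_facts x y.
  apply: (compar M0 MD ML M1 Mmax' Mpow Mx My gen rel rxy).
  apply: HV; exists (pi x y (1, 0)), (pi x y (0, 1)); exact: gen.
have sM : forall i, M (s i).
  move=> i; apply/hs; exists (fun j => (j == i)%:R).
  rewrite (bigD1 i) //= eqxx mulr1 big1 ?addr0 // => j /negbTE ->.
  by rewrite mulr0.
have [t [Mt ht]] := fam_max M0 Hc sM.
have HM : forall x, M x <-> exists r, x = t * r.
  move=> x; split; last by case=> r ->; apply: (MR M0 MD ML M1 Mmax' Mpow).
  case/hs => r ->.
  have /fin_all_exists [c hc] := ht.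
  exists (\sum_i c i * r i); rewrite mulr_sumr; apply: eq_bigr => i _.
  by rewrite hc mulrA.
right; apply: (right_concl (M := M)) => //.
- exact: (unitM M0 MD ML M1 Mmax' Mpow).
- exact: Mpow.
Qed.
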